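(* Let $\alpha\in(-1,1)^N$ with $\alpha\neq0$. The set-valued map $\mathcal{F}^\alpha:\mathcal{C}(I)\rightrightarrows\mathcal{C}(I)$, $\mathcal{F}^\alpha(f)=\{f^\alpha_{\Delta,B_n(f)}:n\in\mathbb{N}\}$, is not convex, and in particular not linear.
   Context: $I=[x_0,x_N]$, $\mathcal{C}(I)$ real continuous functions with sup norm, $\Delta=\{x_0<\dots<x_N\}$, $N\ge2$, $I_i=[x_{i-1},x_i]$, $L_i(x)=a_ix+b_i$ the affine map of $I$ onto $I_i$ with $L_i(x_0)=x_{i-1}$, $L_i(x_N)=x_i$. For $f,b\in\mathcal{C}(I)$ with $b(x_0)=f(x_0)$, $b(x_N)=f(x_N)$, $f^\alpha_{\Delta,b}$ is the unique $g\in\mathcal{C}(I)$ with $g(x)=f(x)+\alpha_i(g-b)(L_i^{-1}(x))$ for $x\in I_i$. $B_n$ is the Bernstein operator $B_nf(x)=\sum_{k=0}^n f\big(x_0+\tfrac kn(x_N-x_0)\big)\binom nk\frac{(x-x_0)^k(x_N-x)^{n-k}}{(x_N-x_0)^n}$. A set-valued map $T:X\rightrightarrows Y$ is convex if $\lambda T(x_1)+(1-\lambda)T(x_2)\subseteq T(\lambda x_1+(1-\lambda)x_2)$ for all $x_1,x_2$ in its domain and $\lambda\in[0,1]$; it is linear if $\beta T(x_1)+\gamma T(x_2)\subseteq T(\beta x_1+\gamma x_2)$ for all $x_1,x_2$ in its domain and $\beta,\gamma\in\mathbb{R}$. *)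

(* Defs.v *)
From Stdlib Require Import Reals Lra Lia.
Open Scope R_scope.

Definition cont_on (a b : R) (f : R -> R) : Prop :=
  forall t, a <= t <= b -> limit1_in f (fun y => a <= y <= b) (f t) t.

(* Partition Delta = {x 0 < ... < x N}; I_i = [x (i-1), x i] for 1 <= i <= N.
   L_i is the affine map of I onto I_i with L_i(x 0) = x (i-1), L_i(x N) = x i;
   Linv x N i is its inverse L_i^{-1} : I_i -> I. *)
Definition Linv (x : nat -> R) (N i : nat) (y : R) : R :=
  x 0%nat + (y - x (i - 1)%nat) * (x N - x 0%nat) / (x i - x (i - 1)%nat).

Definition bernstein (x : nat -> R) (N n : nat) (f : R -> R) (t : R) : R :=
  sum_f_R0 (fun k =>
     f (x 0%nat + INR k / INR n * (x N - x 0%nat)) * C n k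
       * (t - x 0%nat) ^ k * (x N - t) ^ (n - k) / (x N - x 0%nat) ^ n) n.

Definition is_fractal (x : nat -> R) (N : nat) (alpha : nat -> R)
  (f b g : R -> R) : Prop :=
  cont_on (x 0%nat) (x N) g /\
  forall i : nat, (1 <= i <= N)%nat ->
  forall t, x (i - 1)%nat <= t <= x i ->
    g t = f t + alpha i * (g (Linv x N i t) - b (Linv x N i t)).

Definition Falpha (x : nat -> R) (N : nat) (alpha : nat -> R)
  (f g : R -> R) : Prop :=
  exists n : nat, (1 <= n)%nat /\ is_fractal x N alpha f (bernstein x N n f) g.

(* Convexity / linearity of a set-valued map T : X ⇉ Y with domain D,
   T given as a relation (T f g  <->  g ∈ T(f)). *)
Definition convex_svm (D : (R -> R) -> Prop) (T : (R -> R) -> (R -> R) -> Prop) : Prop :=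
  forall f1 f2, D f1 -> D f2 -> forall l, 0 <= l <= 1 ->
  forall g1 g2, T f1 g1 -> T f2 g2 ->
    T (fun t => l * f1 t + (1 - l) * f2 t) (fun t => l * g1 t + (1 - l) * g2 t).

Definition linear_svm (D : (R -> R) -> Prop) (T : (R -> R) -> (R -> R) -> Prop) : Prop :=
  forall f1 f2, D f1 -> D f2 -> forall be ga : R,
  forall g1 g2, T f1 g1 -> T f2 g2 ->
    T (fun t => be * f1 t + ga * f2 t) (fun t => be * g1 t + ga * g2 t).

(* Main.v *)
Require Import Defs.
From Stdlib Require Import Reals Lra Lia.
Open Scope R_scope.

Definition Qf (x : nat -> R) (N : nat) (t : R) : R := (t - x 0%nat) * (x N - t).
Definition Pf (x : nat -> R) (N : nat) (t : R) : R := (Qf x N t + Rabs (Qf x N t)) / 2.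
Fixpoint sumto (n : nat) (F : nat -> R) : R :=
  match n with O => 0 | S k => sumto k F + F (S k) end.
Definition Sf x N (alpha : nat -> R) t := sumto N (fun j => alpha j * Pf x N (Linv x N j t)).
Definition Tpf x N alpha t := Pf x N t - Sf x N alpha t.

Lemma cpt_plus f g t : continuity_pt f t -> continuity_pt g t -> continuity_pt (fun y => f y + g y) t.
Proof. intros; apply (continuity_pt_plus f g t); auto. Qed.
Lemma cpt_minus f g t : continuity_pt f t -> continuity_pt g t -> continuity_pt (fun y => f y - g y) t.
Proof. intros; apply (continuity_pt_minus f g t); auto. Qed.
Lemma cpt_mult f g t : continuity_pt f t -> continuity_pt g t -> continuity_pt (fun y => f y * g y) t.
Proof. intros; apply (continuity_pt_mult f g t); auto. Qed.
Lemma cpt_const c t : continuity_pt (fun _ => c) t.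
Proof. apply continuity_pt_const; intros a b; reflexivity. Qed.
Lemma cpt_id t : continuity_pt (fun y => y) t.
Proof. apply (derivable_continuous_pt id t (derivable_pt_id t)). Qed.
Lemma cpt_comp f g t : continuity_pt f t -> continuity_pt g (f t) -> continuity_pt (fun y => g (f y)) t.
Proof. intros; apply (continuity_pt_comp f g t); auto. Qed.

Lemma cont_to_on a b f : (forall t, continuity_pt f t) -> cont_on a b f.
Proof.
  intros H t _. intros eps Heps. destruct (H t eps Heps) as [al [Hal H']].
  exists al; split; auto. intros y [Dy dy].
  destruct (Req_dec t y) as [<-|Hne].
  - simpl. unfold R_dist. rewrite Rminus_diag_eq, Rabs_R0; auto.
  - apply H'. split; auto. split; auto. exact I.
Qed.

Lemma Q_cont x N t : continuity_pt (Qf x N) t.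
Proof. unfold Qf. apply cpt_mult; apply cpt_minus; auto using cpt_id, cpt_const. Qed.
Lemma P_cont x N t : continuity_pt (Pf x N) t.
Proof.
  unfold Pf, Rdiv. apply cpt_mult; [|apply cpt_const].
  apply cpt_plus; [apply Q_cont|]. apply cpt_comp; [apply Q_cont| apply Rcontinuity_abs].
Qed.
Lemma Linv_cont x N j t : continuity_pt (fun y => Linv x N j y) t.
Proof.
  unfold Linv, Rdiv. apply cpt_plus; [apply cpt_const|].
  apply cpt_mult; [|apply cpt_const]. apply cpt_mult; [|apply cpt_const].
  apply cpt_minus; [apply cpt_id|apply cpt_const].
Qed.
Lemma sumto_cont n (F : nat -> R -> R) t :
  (forall j, continuity_pt (F j) t) -> continuity_pt (fun y => sumto n (fun j => F j y)) t.
Proof.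
  intros H. induction n; simpl.
  - apply cpt_const.
  - apply cpt_plus; auto.
Qed.
Lemma S_cont x N alpha t : continuity_pt (Sf x N alpha) t.
Proof.
  unfold Sf. apply (sumto_cont N (fun j y => alpha j * Pf x N (Linv x N j y))).
  intros j. apply cpt_mult; [apply cpt_const|].
  apply cpt_comp; [apply Linv_cont|apply P_cont].
Qed.
Lemma Tp_cont x N alpha t : continuity_pt (Tpf x N alpha) t.
Proof. unfold Tpf. apply cpt_minus; auto using P_cont, S_cont. Qed.

Lemma sumto_single n F i : (1 <= i <= n)%nat ->
  (forall j, (1 <= j <= n)%nat -> j <> i -> F j = 0) -> sumto n F = F i.
Proof.
  revert i. induction n; intros i Hi H; [lia|]. simpl.
  destruct (Nat.eq_dec i (S n)) as [->|Hne].
  - assert (sumto n F = 0).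
    { clear IHn. assert (forall m, (m <= n)%nat -> sumto m F = 0).
      { induction m; intros Hm; simpl; auto. rewrite IHm by lia. rewrite H; try lia; lra. }
      apply H0; lia. }
    rewrite H0; ring.
  - rewrite (IHn i) by (try lia; intros; apply H; lia). rewrite (H (S n)); try lia; lra.
Qed.

Lemma P_nonpos x N y : Qf x N y <= 0 -> Pf x N y = 0.
Proof. intros H; unfold Pf. rewrite Rabs_left1 by auto. field. Qed.

Lemma Q_le x N y : Qf x N y <= (x N - x 0%nat)^2/4.
Proof. unfold Qf. pose proof (pow2_ge_0 (y - (x 0%nat + x N)/2)). nra. Qed.

Lemma P_bounds x N y : 0 <= Pf x N y <= (x N - x 0%nat)^2/4.
Proof.
  unfold Pf. pose proof (Q_le x N y). pose proof (pow2_ge_0 (x N - x 0%nat)). assert (0 <= (x N - x 0%nat)^2/4) by lra. set (K := (x N - x 0%nat)^2/4) in *. destruct (Rle_dec 0 (Qf x N y)).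
  - rewrite Rabs_right by lra. split; lra.
  - rewrite Rabs_left by lra. split; lra.
Qed.

Lemma xmono (N : nat) (x : nat -> R) (Hx : forall i : nat, (i < N)%nat -> x i < x (S i)) :
  forall a b, (a <= b)%nat -> (b <= N)%nat -> x a <= x b.
Proof.
  intros a b. induction b; intros Hab HbN.
  - replace a with 0%nat by lia. lra.
  - destruct (Nat.eq_dec a (S b)) as [->|Hne]; [lra|].
    apply Rle_trans with (x b). apply IHb; lia. left; apply Hx; lia.
Qed.

Lemma xstep (N : nat) (x : nat -> R) (Hx : forall i : nat, (i < N)%nat -> x i < x (S i)) :
  forall j, (1 <= j <= N)%nat -> x (j - 1)%nat < x j.
Proof.
  intros j Hj. destruct j; [lia|]. replace (S j - 1)%nat with j by lia. apply Hx; lia.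
Qed.

Lemma x0N (N : nat) (x : nat -> R) (Hx : forall i : nat, (i < N)%nat -> x i < x (S i)) (HN : (1 <= N)%nat) :
  x 0%nat < x N.
Proof.
  apply Rle_lt_trans with (x (N-1)%nat). apply (xmono N x Hx); lia.
  apply (xstep N x Hx); lia.
Qed.

Lemma P_out (N : nat) (x : nat -> R) (Hx : forall i : nat, (i < N)%nat -> x i < x (S i))
  i j t : (1 <= i <= N)%nat -> (1 <= j <= N)%nat -> j <> i -> x (i-1)%nat <= t <= x i ->
  Pf x N (Linv x N j t) = 0.
Proof.
  intros Hi Hj Hne Ht. apply P_nonpos.
  pose proof (xstep N x Hx j Hj) as Hd.
  assert (HD : x 0%nat < x N) by (apply (x0N N x Hx); lia).
  unfold Qf. set (y := Linv x N j t).
  destruct (Nat.lt_ge_cases j i).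
  - assert (x j <= t). { apply Rle_trans with (x (i-1)%nat); [apply (xmono N x Hx); lia|lra]. }
    assert (y - x N = (t - x j) * (x N - x 0%nat) / (x j - x (j-1)%nat)).
    { unfold y, Linv. field. lra. }
    assert (0 <= (t - x j) * (x N - x 0%nat) / (x j - x (j-1)%nat)).
    { unfold Rdiv. apply Rmult_le_pos. apply Rmult_le_pos; lra. left; apply Rinv_0_lt_compat; lra. }
    nra.
  - assert (t <= x (j-1)%nat). { apply Rle_trans with (x i); [lra|apply (xmono N x Hx); lia]. }
    assert (y - x 0%nat = (t - x (j-1)%nat) * (x N - x 0%nat) / (x j - x (j-1)%nat)).
    { unfold y, Linv. field. lra. }
    assert ((t - x (j-1)%nat) * (x N - x 0%nat) / (x j - x (j-1)%nat) <= 0).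
    { unfold Rdiv. assert (0 < / (x j - x (j-1)%nat)) by (apply Rinv_0_lt_compat; lra).
      assert ((t - x (j - 1)%nat) * (x N - x 0%nat) <= 0) by nra. nra. }
    nra.
Qed.

Lemma S_collapse (N : nat) (x : nat -> R) (alpha : nat -> R) (Hx : forall i : nat, (i < N)%nat -> x i < x (S i))
  i t : (1 <= i <= N)%nat -> x (i-1)%nat <= t <= x i ->
  Sf x N alpha t = alpha i * Pf x N (Linv x N i t).
Proof.
  intros Hi Ht. unfold Sf. apply (sumto_single N (fun j => alpha j * Pf x N (Linv x N j t)) i Hi).
  intros j Hj Hne. rewrite (P_out N x Hx i j t Hi Hj Hne Ht). ring.
Qed.

Lemma locate (N : nat) (x : nat -> R) (Hx : forall i : nat, (i < N)%nat -> x i < x (S i)) y :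
  forall k, (1 <= k <= N)%nat -> x 0%nat <= y <= x k ->
  exists i, (1 <= i <= N)%nat /\ x (i-1)%nat <= y <= x i.
Proof.
  induction k; intros Hk Hy; [lia|].
  destruct k.
  - exists 1%nat. split; [lia|]. simpl. lra.
  - destruct (Rle_dec y (x (S k))).
    + apply IHk; [lia|lra].
    + exists (S (S k)). split; [lia|]. replace (S (S k) - 1)%nat with (S k) by lia. lra.
Qed.

Lemma bern_scal x N n f g a t : (forall y, f y = a * g y) ->
  bernstein x N n f t = a * bernstein x N n g t.
Proof.
  intros H. unfold bernstein. rewrite scal_sum. apply sum_eq. intros i _. rewrite H.
  unfold Rdiv; ring.
Qed.

Lemma bern1_zero x N f y : f (x 0%nat) = 0 -> f (x N) = 0 -> bernstein x N 1 f y = 0.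
Proof.
  intros H0 H1. unfold bernstein. simpl.
  replace (x 0%nat + 0 / 1 * (x N - x 0%nat)) with (x 0%nat) by (unfold Rdiv; ring).
  replace (x 0%nat + 1 / 1 * (x N - x 0%nat)) with (x N) by (unfold Rdiv; field).
  rewrite H0, H1. unfold Rdiv; ring.
Qed.

Lemma bern2 x N f y : x 0%nat < x N -> bernstein x N 2 f y =
  (f (x 0%nat) * (x N - y)^2 + 2 * f ((x 0%nat + x N)/2) * ((y - x 0%nat) * (x N - y))
   + f (x N) * (y - x 0%nat)^2) / (x N - x 0%nat)^2.
Proof.
  intros HD. unfold bernstein. simpl.
  replace (x 0%nat + 0 / (1+1) * (x N - x 0%nat)) with (x 0%nat) by (unfold Rdiv; ring).
  replace (x 0%nat + 1 / (1+1) * (x N - x 0%nat)) with ((x 0%nat + x N)/2) by field.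
  replace (x 0%nat + (1+1) / (1+1) * (x N - x 0%nat)) with (x N) by field.
  replace (C 2 0) with 1 by (unfold C; simpl; field).
  replace (C 2 1) with 2 by (unfold C; simpl; field).
  replace (C 2 2) with 1 by (unfold C; simpl; field).
  field. lra.
Qed.

Lemma C_nonneg n k : 0 <= C n k.
Proof.
  unfold C, Rdiv. apply Rmult_le_pos. apply pos_INR.
  left. apply Rinv_0_lt_compat. apply Rmult_lt_0_compat; apply INR_fact_lt_0.
Qed.

Lemma bernQ_lt x N n : (1 <= n)%nat -> x 0%nat < x N ->
  bernstein x N n (Qf x N) ((x 0%nat + x N)/2) < Qf x N ((x 0%nat + x N)/2).
Proof.
  intros Hn HD. set (m := (x 0%nat + x N)/2). set (D := x N - x 0%nat).
  set (K := D^2/4).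
  assert (HQm : Qf x N m = K) by (unfold Qf, K, m, D; field).
  assert (HDn : 0 < D^n) by (apply pow_lt; unfold D; lra).
  set (W := fun k => K * (C n k * (m - x 0%nat)^k * (x N - m)^(n-k) / D^n)).
  assert (HW : sum_f_R0 W n = K).
  { unfold W. transitivity (sum_f_R0 (fun i => (C n i * (m - x 0%nat)^i * (x N - m)^(n-i)) * (K * / D^n)) n).
    - apply sum_eq; intros; unfold Rdiv; ring.
    - rewrite <- scal_sum. rewrite <- binomial. replace (m - x 0%nat + (x N - m)) with D by (unfold m, D; ring).
      field. lra. }
  rewrite HQm. rewrite <- HW. unfold bernstein. fold D.
  rewrite (decomp_sum _ n) by lia. rewrite (decomp_sum W n) by lia.
  apply Rplus_lt_le_compat.
  - unfold W. simpl. replace (Qf x N (x 0%nat + 0 / INR n * D)) with 0 by (unfold Qf, Rdiv; ring).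
    rewrite Nat.sub_0_r.
    replace (C n 0) with 1 by (unfold C; rewrite Nat.sub_0_r; simpl; field; apply INR_fact_neq_0).
    assert (0 < (x N - m)^n) by (apply pow_lt; unfold m; lra).
    assert (0 < K) by (unfold K; assert (0 < D) by (unfold D; lra); nra).
    assert (0 < / D^n) by (apply Rinv_0_lt_compat; lra).
    unfold Rdiv. replace (0 * 1 * 1 * (x N - m) ^ n * / D ^ n) with 0 by ring.
    apply Rmult_lt_0_compat; auto. nra.
  - apply sum_Rle. intros k Hk. unfold W.
    assert (0 <= C n (S k) * (m - x 0%nat) ^ S k * (x N - m) ^ (n - S k) / D ^ n).
    { unfold Rdiv. apply Rmult_le_pos; [|left; apply Rinv_0_lt_compat; lra].
      apply Rmult_le_pos; [apply Rmult_le_pos|]. apply C_nonneg.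
      apply pow_le; unfold m; lra. apply pow_le; unfold m; lra. }
    pose proof (Q_le x N (x 0%nat + INR (S k) / INR n * D)) as HQ. fold D in HQ. fold K in HQ.
    replace (Qf x N (x 0%nat + INR (S k) / INR n * D) * C n (S k) * (m - x 0%nat) ^ S k *
      (x N - m) ^ (n - S k) / D ^ n) with
      (Qf x N (x 0%nat + INR (S k) / INR n * D) * (C n (S k) * (m - x 0%nat) ^ S k *
      (x N - m) ^ (n - S k) / D ^ n)) by (unfold Rdiv; ring).
    apply Rmult_le_compat_r; auto.
Qed.

Theorem mainTheorem14 (N : nat) (x : nat -> R) (alpha : nat -> R)
  (HN : (2 <= N)%nat)
  (Hx : forall i : nat, (i < N)%nat -> x i < x (S i))
  (Halpha : forall i : nat, (1 <= i <= N)%nat -> -1 < alpha i < 1)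
  (Hnz : exists i : nat, (1 <= i <= N)%nat /\ alpha i <> 0) :
  ~ convex_svm (cont_on (x 0%nat) (x N)) (Falpha x N alpha) /\
  ~ linear_svm (cont_on (x 0%nat) (x N)) (Falpha x N alpha).
Proof.
  assert (HD : x 0%nat < x N) by (apply (x0N N x Hx); lia).
  set (m := (x 0%nat + x N)/2).
  set (K := (x N - x 0%nat)^2/4).
  assert (HK : 0 < K) by (unfold K; nra).
  assert (HQm : Qf x N m = K) by (unfold Qf, K, m; field).
  assert (HPm : Pf x N m = K) by (unfold Pf; rewrite HQm, Rabs_right by lra; field).
  set (c := Tpf x N alpha m).
  assert (Hc : 0 < c).
  { destruct (locate N x Hx m N) as [im [Him Hmm]]; [lia|unfold m; lra|].
    unfold c, Tpf. rewrite (S_collapse N x alpha Hx im m Him Hmm), HPm.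
    pose proof (P_bounds x N (Linv x N im m)) as HB. fold K in HB.
    specialize (Halpha im Him).
    destruct (Rle_dec (alpha im) 0); nra. }
  set (s := -4 * c / (x N - x 0%nat)^2).
  assert (Hs : s <> 0).
  { unfold s. assert (0 < (x N - x 0%nat)^2) by nra. unfold Rdiv.
    assert (0 < / (x N - x 0%nat)^2) by (apply Rinv_0_lt_compat; lra). nra. }
  assert (HP0 : Pf x N (x 0%nat) = 0) by (apply P_nonpos; unfold Qf; nra).
  assert (HPN : Pf x N (x N) = 0) by (apply P_nonpos; unfold Qf; nra).
  assert (HT0 : Tpf x N alpha (x 0%nat) = 0).
  { unfold Tpf. rewrite (S_collapse N x alpha Hx 1 (x 0%nat)); [|lia|].
    - replace (Linv x N 1 (x 0%nat)) with (x 0%nat) by (unfold Linv; simpl; unfold Rdiv; ring).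
      rewrite HP0; ring.
    - simpl. split; [lra|]. left; apply Hx; lia. }
  assert (HTN : Tpf x N alpha (x N) = 0).
  { pose proof (xstep N x Hx N) as HsN.
    unfold Tpf. rewrite (S_collapse N x alpha Hx N (x N)); [|lia|].
    - replace (Linv x N N (x N)) with (x N) by (unfold Linv; field; assert (x (N-1)%nat < x N) by (apply HsN; lia); lra).
      rewrite HPN; ring.
    - split; [|lra]. left; apply HsN; lia. }
  set (f1 := Tpf x N alpha). set (g1 := Pf x N).
  set (f2 := fun t => s * Qf x N t - Tpf x N alpha t).
  set (g2 := fun t => s * Qf x N t - Pf x N t).
  assert (F1 : Falpha x N alpha f1 g1).
  { exists 1%nat. split; [lia|]. split.
    - apply cont_to_on; intros; apply P_cont.
    - intros i Hi t Ht. rewrite bern1_zero by auto. unfold f1, g1, Tpf.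
      rewrite (S_collapse N x alpha Hx i t Hi Ht). ring. }
  assert (HB2 : forall y, bernstein x N 2 f2 y = s * Qf x N y).
  { intros y. rewrite bern2 by auto. unfold f2. fold m. fold c. rewrite HT0, HTN, HQm.
    replace (Qf x N (x 0%nat)) with 0 by (unfold Qf; ring).
    replace (Qf x N (x N)) with 0 by (unfold Qf; ring).
    unfold s, K, Qf. field. lra. }
  assert (F2 : Falpha x N alpha f2 g2).
  { exists 2%nat. split; [lia|]. split.
    - apply cont_to_on; intros. unfold g2. apply cpt_minus; [apply cpt_mult; [apply cpt_const|apply Q_cont]|apply P_cont].
    - intros i Hi t Ht. rewrite HB2. unfold f2, g2, Tpf.
      rewrite (S_collapse N x alpha Hx i t Hi Ht). ring. }
  assert (Cf1 : cont_on (x 0%nat) (x N) f1) by (apply cont_to_on; intros; apply Tp_cont).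
  assert (Cf2 : cont_on (x 0%nat) (x N) f2).
  { apply cont_to_on; intros. unfold f2. apply cpt_minus; [apply cpt_mult; [apply cpt_const|apply Q_cont]|apply Tp_cont]. }
  assert (NC : ~ convex_svm (cont_on (x 0%nat) (x N)) (Falpha x N alpha)).
  { intros Hcv.
    destruct (Hcv f1 f2 Cf1 Cf2 (1/2) ltac:(lra) g1 g2 F1 F2) as [n [Hn [_ Hfr]]].
    destruct Hnz as [i0 [Hi0 Ha0]].
    pose proof (xstep N x Hx i0 Hi0) as Hst.
    set (ts := (x (i0-1)%nat + x i0)/2).
    specialize (Hfr i0 Hi0 ts ltac:(unfold ts; lra)).
    replace (Linv x N i0 ts) with m in Hfr by (unfold Linv, ts, m; field; lra).
    rewrite (bern_scal x N n _ (Qf x N) (s/2)) in Hfr.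
    2:{ intros y. unfold f1, f2. cbv beta. field. }
    unfold f1, f2, g1, g2 in Hfr. rewrite HQm in Hfr.
    pose proof (bernQ_lt x N n Hn HD) as Hlt. fold m in Hlt. rewrite HQm in Hlt.
    assert (E : alpha i0 * (s/2 * (K - bernstein x N n (Qf x N) m)) = 0).
    { set (bq := bernstein x N n (Qf x N) m) in *.
      set (P1 := Pf x N ts) in *. set (P2 := Pf x N m) in *.
      set (T1 := Tpf x N alpha ts) in *. set (Q1 := Qf x N ts) in *.
      match type of Hfr with ?L = ?R => transitivity (R - L) end.
      - field.
      - rewrite Hfr. ring. }
    apply Rmult_integral in E. destruct E as [E|E]; [contradiction|].
    apply Rmult_integral in E. destruct E as [E|E]; [apply Hs; lra|lra]. }
  split; auto.
  intros Hl. apply NC. intros f1' f2' H1 H2 l Hl01 g1' g2' T1 T2.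
  apply (Hl f1' f2' H1 H2 l (1-l) g1' g2' T1 T2).
Qed.
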